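(* Let $H,\mathsf H$ be semigroups, $\mathfrak h\colon H\to\mathsf H$ a homomorphism, $X$ an $H$-set, $S$ an order-complete ordered $\mathsf H$-set with completion $\overline S$, and $f\colon X\to\overline S$. Then: [l] $\mathrm{lE}^f_{\mathcal H_{\le}}=f$ if and only if $f\in\mathcal H_{\le}$; [u] $\mathrm{uE}_f^{\mathcal H_{\ge}}=f$ if and only if $f\in\mathcal H_{\ge}$. If in addition $\mathsf H$ is a group, the following three conditions are equivalent: (1) $f\in\overline{\mathcal H}$; (2) $\mathrm{lE}^f_{\overline{\mathcal H}}=f$; (3) $\mathrm{uE}_f^{\overline{\mathcal H}}=f$.
   Context: $X$ is an $H$-set: an action $(h,x)\mapsto hx$ with $h_1(h_2x)=(h_1h_2)x$ (and $1x=x$ if $H$ has identity $1$); similarly $S$ is an $\mathsf H$-set, with a partial order $\leqslant$ such that $s_1\leqslant s_2\Rightarrow\mathsf h s_1\leqslant\mathsf h s_2$. $S$ is order-complete: every nonempty subset bounded below (above) in $S$ has an infimum (supremum) in $S$. The completion $\overline S$ adjoins a new least element $\inf S$ if $S$ has none and a new greatest element $\sup S$ if $S$ has none; the action is extended by $\mathsf h\cdot\inf S=\inf S$, $\mathsf h\cdot\sup S=\sup S$ for the adjoined symbols; in $\overline S$, $\sup\varnothing$ is the least and $\inf\varnothing$ the greatest element. Functions $X\to\overline S$ are ordered pointwise. Classes: $\overline{\mathcal H}$ = functions $\varphi\colon X\to\overline S$ with $\varphi(hx)=\mathfrak h(h)\varphi(x)$ for all $h\in H,x\in X$; $\mathcal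 H_{\le}$ = functions $\varphi\colon X\to\overline S$ with $\varphi(hx)\leqslant\mathfrak h(h)\varphi(x)$ for all $h,x$; $\mathcal H_{\ge}$ = functions $\varphi\colon X\to\overline S$ with $\mathfrak h(h)\varphi(x)\leqslant\varphi(hx)$ for all $h,x$. For a class $\Phi$: $\mathrm{lE}^f_\Phi(x)=\sup\{\varphi(x):\varphi\in\Phi,\ \varphi\leqslant f\text{ on }X\}$ and $\mathrm{uE}_f^\Phi(x)=\inf\{\varphi(x):\varphi\in\Phi,\ f\leqslant\varphi\text{ on }X\}$, in $\overline S$. *)

(* Defs.v *)
Definition associative {G : Type} (mul : G -> G -> G) : Prop :=
  forall a b c, mul a (mul b c) = mul (mul a b) c.

Definition is_identity {G : Type} (mul : G -> G -> G) (e : G) : Prop :=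
  forall g, mul e g = g /\ mul g e = g.

Definition is_group {G : Type} (mul : G -> G -> G) : Prop :=
  exists e, is_identity mul e /\ forall g, exists g', mul g' g = e /\ mul g g' = e.

Definition is_action {G T : Type} (mul : G -> G -> G) (act : G -> T -> T) : Prop :=
  (forall g1 g2 t, act g1 (act g2 t) = act (mul g1 g2) t) /\
  (forall e, is_identity mul e -> forall t, act e t = t).

Definition is_partial_order {S : Type} (le : S -> S -> Prop) : Prop :=
  (forall s, le s s) /\
  (forall s t, le s t -> le t s -> s = t) /\
  (forall s t u, le s t -> le t u -> le s u).

Definition IsSup {T : Type} (R : T -> T -> Prop) (A : T -> Prop) (z : T) : Prop :=
  (forall a, A a -> R a z) /\ (forall u, (forall a, A a -> R a u) -> R z u).

Definition IsInf {T : Type} (R : T -> T -> Prop) (A : T -> Prop) (z : T) : Prop :=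
  (forall a, A a -> R z a) /\ (forall u, (forall a, A a -> R u a) -> R u z).

Definition order_complete {S : Type} (le : S -> S -> Prop) : Prop :=
  (forall A : S -> Prop, (exists a, A a) -> (exists b, forall a, A a -> le b a) ->
     exists i, IsInf le A i) /\
  (forall A : S -> Prop, (exists a, A a) -> (exists b, forall a, A a -> le a b) ->
     exists s, IsSup le A s).

Inductive ext (S : Type) : Type := EBot | EFin (s : S) | ETop.
Arguments EBot {S}. Arguments ETop {S}. Arguments EFin {S} s.

(* EBot = adjoined inf S (only if S has no least element),
   ETop = adjoined sup S (only if S has no greatest element). *)
Definition ext_ok {S : Type} (le : S -> S -> Prop) (z : ext S) : Prop :=
  match z with
  | EBot => ~ (exists m, forall s, le m s)
  | EFin _ => True
  | ETop => ~ (exists M, forall s, le s M)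
  end.

Definition Sbar {S : Type} (le : S -> S -> Prop) : Type := { z : ext S | ext_ok le z }.

Definition ext_le {S : Type} (le : S -> S -> Prop) (a b : ext S) : Prop :=
  match a, b with
  | EBot, _ => True
  | _, ETop => True
  | EFin s, EFin t => le s t
  | _, _ => False
  end.

Definition Sbar_le {S : Type} (le : S -> S -> Prop) (a b : Sbar le) : Prop :=
  ext_le le (proj1_sig a) (proj1_sig b).

Definition ext_act {G S : Type} (act : G -> S -> S) (g : G) (z : ext S) : ext S :=
  match z with
  | EFin s => EFin (act g s)
  | EBot => EBot
  | ETop => ETop
  end.

Lemma ext_act_ok {G S : Type} (le : S -> S -> Prop) (act : G -> S -> S) g z :
  ext_ok le z -> ext_ok le (ext_act act g z).
Proof. destruct z; simpl; auto. Qed.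

Definition Sbar_act {G S : Type} (le : S -> S -> Prop) (act : G -> S -> S)
  (g : G) (a : Sbar le) : Sbar le :=
  exist _ (ext_act act g (proj1_sig a)) (@ext_act_ok G S le act g (proj1_sig a) (proj2_sig a)).

Section Classes.
Context {H HH X S : Type} (hom : H -> HH) (actX : H -> X -> X)
        (actS : HH -> S -> S) (le : S -> S -> Prop).

Definition in_Hbar (phi : X -> Sbar le) : Prop :=
  forall h x, phi (actX h x) = Sbar_act le actS (hom h) (phi x).

Definition in_Hle (phi : X -> Sbar le) : Prop :=
  forall h x, Sbar_le le (phi (actX h x)) (Sbar_act le actS (hom h) (phi x)).

Definition in_Hge (phi : X -> Sbar le) : Prop :=
  forall h x, Sbar_le le (Sbar_act le actS (hom h) (phi x)) (phi (actX h x)).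
End Classes.

Definition is_lE {X S : Type} (le : S -> S -> Prop) (Phi : (X -> Sbar le) -> Prop)
  (f g : X -> Sbar le) : Prop :=
  forall x, IsSup (Sbar_le le)
    (fun v => exists phi, Phi phi /\ (forall y, Sbar_le le (phi y) (f y)) /\ v = phi x)
    (g x).

Definition is_uE {X S : Type} (le : S -> S -> Prop) (Phi : (X -> Sbar le) -> Prop)
  (f g : X -> Sbar le) : Prop :=
  forall x, IsInf (Sbar_le le)
    (fun v => exists phi, Phi phi /\ (forall y, Sbar_le le (f y) (phi y)) /\ v = phi x)
    (g x).

(* Main.v *)
Require Import Defs.
From Stdlib Require Import ProofIrrelevance.

Section Aux.
Context {S G : Type} (le : S -> S -> Prop) (le_po : is_partial_order le).

Lemma Sbar_eq (a b : Sbar le) : proj1_sig a = proj1_sig b -> a = b.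
Proof.
  destruct a as [a pa], b as [b pb]; simpl; intros ->.
  f_equal; apply proof_irrelevance.
Qed.

Lemma Sbar_le_refl a : Sbar_le le a a.
Proof. destruct a as [[| s |] p]; unfold Sbar_le, ext_le in *; simpl in *; auto. apply (proj1 le_po). Qed.

Lemma Sbar_le_trans a b c : Sbar_le le a b -> Sbar_le le b c -> Sbar_le le a c.
Proof.
  destruct a as [[| s |] p], b as [[| t |] q], c as [[| u |] r]; unfold Sbar_le, ext_le in *; simpl in *; auto;
  try contradiction.
  apply (proj2 (proj2 le_po)).
Qed.

Lemma Sbar_le_antisym a b : Sbar_le le a b -> Sbar_le le b a -> a = b.
Proof.
  intros H1 H2; apply Sbar_eq.
  destruct a as [[| s |] p], b as [[| t |] q]; unfold Sbar_le, ext_le in *; simpl in *; auto; try contradiction.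
  f_equal; apply (proj1 (proj2 le_po)); auto.
Qed.

Context (actS : G -> S -> S)
  (actS_mono : forall g s1 s2, le s1 s2 -> le (actS g s1) (actS g s2)).

Lemma Sbar_act_mono g a b : Sbar_le le a b ->
  Sbar_le le (Sbar_act le actS g a) (Sbar_act le actS g b).
Proof.
  destruct a as [[| s |] p], b as [[| t |] q]; unfold Sbar_le, ext_le in *; simpl in *; auto.
Qed.

Context (mul : G -> G -> G) (actS_ok : is_action mul actS).

Lemma Sbar_act_inv g g' e a : is_identity mul e -> mul g' g = e ->
  Sbar_act le actS g' (Sbar_act le actS g a) = a.
Proof.
  intros He Hg; apply Sbar_eq.
  destruct a as [[| s |] p]; unfold Sbar_le, ext_le in *; simpl in *; auto.
  f_equal. rewrite (proj1 actS_ok), Hg. apply (proj2 actS_ok); auto.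
Qed.
End Aux.

Theorem theorem1
  (H HH X S : Type) (mulH : H -> H -> H) (mulHH : HH -> HH -> HH)
  (hom : H -> HH) (actX : H -> X -> X) (actS : HH -> S -> S)
  (le : S -> S -> Prop)
  (assocH : associative mulH) (assocHH : associative mulHH)
  (hom_mul : forall a b, hom (mulH a b) = mulHH (hom a) (hom b))
  (actX_ok : is_action mulH actX) (actS_ok : is_action mulHH actS)
  (le_po : is_partial_order le)
  (actS_mono : forall g s1 s2, le s1 s2 -> le (actS g s1) (actS g s2))
  (le_complete : order_complete le)
  (f : X -> Sbar le) :
  (is_lE le (in_Hle hom actX actS le) f f <-> in_Hle hom actX actS le f) /\
  (is_uE le (in_Hge hom actX actS le) f f <-> in_Hge hom actX actS le f) /\
  (is_group mulHH ->
     (in_Hbar hom actX actS le f <-> is_lE le (in_Hbar hom actX actS le) f f) /\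
     (in_Hbar hom actX actS le f <-> is_uE le (in_Hbar hom actX actS le) f f)).
Proof.
  pose proof (Sbar_le_refl le le_po) as Rf.
  pose proof (Sbar_le_trans le le_po) as Tr.
  pose proof (Sbar_act_mono le actS actS_mono) as Mo.
  split; [|split].
  - split.
    + intros HE h x. destruct (HE (actX h x)) as [_ Hl]. apply Hl.
      intros a [phi [Hp [Hle ->]]].
      eapply Tr; [apply Hp|]. apply Mo. apply Hle.
    + intros Hf x. split.
      * intros a [phi [Hp [Hle ->]]]. apply Hle.
      * intros u Hu. apply Hu. exists f; repeat split; auto.
  - split.
    + intros HE h x. destruct (HE (actX h x)) as [_ Hl]. apply Hl.
      intros a [phi [Hp [Hle ->]]].
      eapply Tr; [|apply Hp]. apply Mo. apply Hle.
    + intros Hf x. split.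
      * intros a [phi [Hp [Hle ->]]]. apply Hle.
      * intros u Hu. apply Hu. exists f; repeat split; auto.
  - intros [e [He Hinv]]. split; split.
    + intros Hf x. split.
      * intros a [phi [Hp [Hle ->]]]. apply Hle.
      * intros u Hu. apply Hu. exists f; repeat split; auto.
    + intros HE h x. destruct (Hinv (hom h)) as [g' [Hg1 Hg2]].
      apply (Sbar_le_antisym le le_po).
      * destruct (HE (actX h x)) as [_ Hl]. apply Hl.
        intros a [phi [Hp [Hle ->]]]. rewrite Hp. apply Mo. apply Hle.
      * rewrite <- (Sbar_act_inv le actS mulHH actS_ok g' (hom h) e (f (actX h x)) He Hg2).
        apply Mo.
        destruct (HE x) as [_ Hl]. apply Hl.
        intros a [phi [Hp [Hle ->]]].
        rewrite <- (Sbar_act_inv le actS mulHH actS_ok (hom h) g' e (phi x) He Hg1).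
        apply Mo. rewrite <- Hp. apply Hle.
    + intros Hf x. split.
      * intros a [phi [Hp [Hle ->]]]. apply Hle.
      * intros u Hu. apply Hu. exists f; repeat split; auto.
    + intros HE h x. destruct (Hinv (hom h)) as [g' [Hg1 Hg2]].
      apply (Sbar_le_antisym le le_po).
      * rewrite <- (Sbar_act_inv le actS mulHH actS_ok g' (hom h) e (f (actX h x)) He Hg2).
        apply Mo.
        destruct (HE x) as [_ Hl]. apply Hl.
        intros a [phi [Hp [Hle ->]]].
        rewrite <- (Sbar_act_inv le actS mulHH actS_ok (hom h) g' e (phi x) He Hg1).
        apply Mo. rewrite <- Hp. apply Hle.
      * destruct (HE (actX h x)) as [_ Hl]. apply Hl.
        intros a [phi [Hp [Hle ->]]]. rewrite Hp. apply Mo. apply Hle.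
Qed.
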